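(* Let $\omega\ge1$ and $n>2$ be integers with $n<2^\omega$, $r=2^\omega$, $R=2^{\omega n}$, let $p$ be a positive integer with $p<R$, let $r^{-1}$ be a positive integer with $rr^{-1}\equiv1\pmod p$, and $p'=(rr^{-1}-1)/p$. Let $T$ be an integer with $0\le T<pR$, $T_i=\lfloor T/r^{i-1}\rfloor\bmod r$, and for $1\le i\le n-2$ let $M_i\in\{0,\dots,p-1\}$ with $M_i\equiv r^{-n+i+1}\pmod p$ and $H_i=T_iM_i$. Let $T^{(n-2)}=\lfloor T/r^{n-2}\rfloor+\sum_{i=1}^{n-2}H_i$, and for $i=n-1,n$ let $Q_i=(T^{(i-1)}p')\bmod r$ and $T^{(i)}=(T^{(i-1)}+Q_ip)/r$. Then $T^{(n)}<3p$.
   Context: Negative powers of $r$ denote powers of the inverse of $r$ modulo $p$. *)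

(* Defs.v *)
From mathcomp Require Export all_boot.

(* Main.v *)
Require Import Defs.
From mathcomp Require Import all_boot.
From mathcomp Require Import zify.

Lemma A (a b c p r n : nat) : a < p*(r*r) -> b <= (n-1-1)*(r*p) -> c*p <= (r-1)*p -> 0<r -> 2<n -> a+b+c*p < p*(r+n-1)*r.
Proof. move=> *. nia. Qed.
Lemma B (a c p r n : nat) : a < p*(r+n-1) -> c*p <= (r-1)*p -> 0<r -> 2<n -> n < r -> a+c*p < 3*p*r.
Proof. move=> *. nia. Qed.

Theorem lemma5 (w n p rinv T : nat) (M : nat -> nat) :
  1 <= w -> 2 < n -> n < 2 ^ w ->
  0 < p -> p < 2 ^ (w * n) ->
  0 < rinv -> 2 ^ w * rinv = 1 %[mod p] ->
  T < p * 2 ^ (w * n) ->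
  (forall i, 1 <= i <= n - 2 -> M i < p /\ M i = rinv ^ (n - i - 1) %[mod p]) ->
  let r := 2 ^ w in
  let p' := (r * rinv - 1) %/ p in
  let T_ i := (T %/ r ^ (i - 1)) %% r in
  let H i := T_ i * M i in
  let Tn2 := T %/ r ^ (n - 2) + \sum_(1 <= i < n - 1) H i in
  let Qn1 := (Tn2 * p') %% r in
  let Tn1 := (Tn2 + Qn1 * p) %/ r in
  let Qn := (Tn1 * p') %% r in
  let Tn := (Tn1 + Qn * p) %/ r in
  Tn < 3 * p.
Proof.
move=> hw hn hnr hp _ _ _ hT hM.
cbv zeta.
set r := 2 ^ w.
set p' := (r * rinv - 1) %/ p.
set H := fun i => (T %/ r ^ (i - 1)) %% r * M i.
set Tn2 := T %/ r ^ (n - 2) + _.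
set Qn1 := (Tn2 * p') %% r.
set Tn1 := (Tn2 + Qn1 * p) %/ r.
set Qn := (Tn1 * p') %% r.
have rpos : 0 < r by rewrite /r expn_gt0.
have hR : 2 ^ (w * n) = r ^ 2 * r ^ (n - 2).
  by rewrite -expnD subnKC ?(ltnW hn) // /r -expnM.
have h1 : T %/ r ^ (n - 2) < p * r ^ 2.
  by rewrite ltn_divLR ?expn_gt0 ?rpos // -mulnA -hR.
have h2 : \sum_(1 <= i < n - 1) H i <= \sum_(1 <= i < n - 1) (r * p).
  rewrite big_nat [X in _ <= X]big_nat; apply: leq_sum => i /andP [hi1 hi2].
  have [hm _] := hM i (ltac:(apply/andP; split => //; lia)).
  by apply: leq_mul; [exact: ltnW (ltn_pmod _ rpos) | exact: ltnW].
rewrite sum_nat_const_nat in h2.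
have hQ1 : Qn1 < r by exact: ltn_pmod.
have hQ : Qn < r by exact: ltn_pmod.
have h3 : Qn1 * p <= (r - 1) * p by apply: leq_mul => //; rewrite subn1 -ltnS prednK.
have h4 : Qn * p <= (r - 1) * p by apply: leq_mul => //; rewrite subn1 -ltnS prednK.
have hTn1 : Tn1 < p * (r + n - 1).
  rewrite /Tn1 ltn_divLR // /Tn2.
  by apply: A => //; rewrite mulnn.
rewrite ltn_divLR //.
exact: (B _ _ _ _ _ hTn1 h4 rpos hn hnr).
Qed.
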